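(* Let $\phi\ge1$ and let $w_1,\ldots,w_n$ be independent random variables, each $w_i$ uniformly distributed on an arbitrary interval $A_i\subseteq[0,1]$ of length $1/\phi$. For $k\in\mathbb{N}$ let $\mathcal{F}_k$ denote the event that there exist two different vectors $x,y\in\{0,1\}^n$ with $|w^{\mathsf T}x-w^{\mathsf T}y|\le n/k$. Then for every $k\in\mathbb{N}$, $\Pr[\mathcal{F}_k]\le \frac{2^{2n+1}n\phi}{k}$. *)

(* Defs.v *)
From HB Require Import structures.
From mathcomp Require Import all_boot all_order all_algebra.
From mathcomp Require Import all_classical all_reals all_analysis.
Set Implicit Arguments. Unset Strict Implicit. Unset Printing Implicit Defensive.
Import Order.TTheory GRing.Theory Num.Theory.
Local Open Scope classical_set_scope.
Local Open Scope ring_scope.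

(* Mutual independence of a finite family X_0, ..., X_{n-1} of real random
   variables: for all Borel sets B_0, ..., B_{n-1},
   P(X_0 \in B_0, ..., X_{n-1} \in B_{n-1}) = prod_i P(X_i \in B_i).
   (Subfamilies are covered by taking B_i = setT.) *)
Definition mutually_independent d (T : measurableType d) (R : realType)
    (P : probability T R) (n : nat) (X : 'I_n -> T -> R) : Prop :=
  forall B : 'I_n -> set R, (forall i, measurable (B i)) ->
    P (\bigcap_(i in [set: 'I_n]) (X i @^-1` B i)) =
    (\prod_(i < n) P (X i @^-1` B i))%E.

(* X is uniformly distributed on the interval [a, b] (a < b assumed separately):
   its law has density uniform_pdf a b w.r.t. Lebesgue measure. *)
Definition uniform_on d (T : measurableType d) (R : realType)
    (P : probability T R) (X : T -> R) (a b : R) : Prop :=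
  forall B : set R, measurable B ->
    P (X @^-1` B) = (\int[lebesgue_measure]_(x in B) (uniform_pdf a b x)%:E)%E.

Definition dotb (R : realType) (n : nat) (w : 'I_n -> R) (x : 'I_n -> bool) : R :=
  \sum_(i < n) w i * (x i)%:R.

Definition event_F d (T : measurableType d) (R : realType) (n k : nat)
    (w : 'I_n -> T -> R) : set T :=
  [set t | exists x y : 'I_n -> bool, x <> y /\
      `| dotb (fun i => w i t) x - dotb (fun i => w i t) y | <= n%:R / k%:R].

(* Main.v *)
Require Import Defs.
From HB Require Import structures.
From mathcomp Require Import all_boot all_order all_algebra.
From mathcomp Require Import all_classical all_reals all_analysis.
Import Order.TTheory GRing.Theory Num.Theory.
Local Open Scope classical_set_scope.
From mathcomp Require Import ring lra.
Local Open Scope ring_scope.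
Lemma key (R : realType) (n : nat) (i : 'I_n) (z v u : 'I_n -> R) (M e : R) :
  z i * z i = 1 -> `|z i| = 1 ->
  (forall j, `|z j| <= 1) -> (forall j, j != i -> `|v j - u j| <= e) -> 0 <= e ->
  `|\sum_j v j * z j| <= M ->
  `|v i - (- z i * \sum_(j | j != i) z j * u j)| <= M + n%:R * e.
Proof.
move=> zz zi z1 vu e0 hD.
set D := \sum_j v j * z j in hD.
have hDs : D = v i * z i + \sum_(j | j != i) v j * z j by rewrite /D (bigD1 i).
have -> : v i - (- z i * \sum_(j | j != i) z j * u j) =
    z i * D - z i * \sum_(j | j != i) z j * (v j - u j).
  rewrite [X in _ - z i * X](eq_bigr (fun j => z j * v j - z j * u j)); last by move=> j _; rewrite mulrBr.
  rewrite sumrB hDs.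
  have -> : \sum_(j | j != i) v j * z j = \sum_(j | j != i) z j * v j.
    by apply: eq_bigr => j _; rewrite mulrC.
  rewrite mulrDr mulrA (mulrC (z i) (v i)) -mulrA zz mulr1.
  ring.
apply: (le_trans (ler_normB _ _)).
rewrite !normrM zi !mul1r lerD //.
apply: (le_trans (ler_norm_sum _ _ _)).
apply: (@le_trans _ _ (\sum_(j | j != i) e)).
  apply: ler_sum => j ji; rewrite normrM.
  by rewrite -[e]mul1r ler_pM // vu.
rewrite sumr_const.
rewrite -[e *+ _]mulr_natl; apply: ler_wpM2r => //; rewrite ler_nat.
by apply: leq_trans (max_card _) _; rewrite card_ord.
Qed.

Section S.
Context (R : realType) (d : measure_display) (T : measurableType d) (P : probability T R).


Lemma union_bound (I : finType) (A : set T) (F : I -> set T) :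
  measurable A -> (forall i, measurable (F i)) -> A `<=` \bigcup_(i in setT) F i ->
  (P A <= \sum_(i : I) P (F i))%E.
Proof.
move=> mA mF AF.
have := content_sub_fsum P (D:=[set: I]) finite_finset (fun i _ => mF i) mA AF.
rewrite (fsbigE (enum I)) ?enum_uniq //; last by move=> i _; rewrite mem_enum.
by under eq_bigl do rewrite in_setT; rewrite big_enum.
Qed.

Definition cell (N t : nat) : set R := `[t%:R / N%:R, t.+1%:R / N%:R[%classic.

Lemma cellP (N t : nat) (v : R) : (0 < N)%N ->
  cell N t v <-> (0 <= v /\ Num.truncn (v * N%:R) = t).
Proof.
move=> N0; have Np : (0 : R) < N%:R by rewrite ltr0n.
rewrite /cell /= in_itv /= !ler_pdivrMr // !ltr_pdivlMr //.
split.
- move=> /andP[h1 h2]; split.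
    by rewrite -(pmulr_lge0 _ Np) (le_trans _ h1).
  by apply: truncn_def; rewrite h1 h2.
- move=> [v0 <-]; apply: truncn_itv; exact: mulr_ge0.
Qed.

Lemma cell_meas N t : measurable (cell N t).
Proof. exact: measurable_itv. Qed.

Lemma sum_cells (X : {RV P >-> R}) N : (0 < N)%N ->
  (\sum_(t < N.+1) P (X @^-1` cell N t) <= 1)%E.
Proof.
move=> N0.
rewrite -measure_semi_additive_ord.
- apply: probability_le1; apply: bigsetU_measurable => k _; apply: measurable_funPTI; exact: cell_meas.
- by move=> k; apply: measurable_funPTI; exact: cell_meas.
- move=> s t _ _ [v [/= /cellP-/(_ N0) [_ h1] /cellP-/(_ N0) [_ h2]]].
  by apply: ord_inj; rewrite -h1 -h2.
- by apply: bigsetU_measurable => k _; apply: measurable_funPTI; exact: cell_meas.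
Qed.

Lemma pdf_le (phi a x : R) : 0 < phi -> uniform_pdf a (a + phi^-1) x <= phi.
Proof.
move=> ph; rewrite /uniform_pdf; case: ifP => _.
  by rewrite addrAC subrr add0r invrK.
exact: ltW.
Qed.

Lemma win_bound (X : {RV P >-> R}) (phi a u v : R) : 0 < phi ->
  uniform_on P X a (a + phi^-1) -> u <= v ->
  (P (X @^-1` `[u, v]%classic) <= ((v - u) * phi)%:E)%E.
Proof.
move=> ph hU uv; rewrite hU; last exact: measurable_itv.
have ab : a < a + phi^-1 by rewrite ltrDl invr_gt0.
apply: (@le_trans _ _ (\int[lebesgue_measure]_(x in `[u, v]%classic) (cst phi%:E x))%E).
  apply: ge0_le_integral.
- exact: measurable_itv.
- by move=> x _; rewrite lee_fin uniform_pdf_ge0.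
- apply/measurable_realfun.measurable_EFinP; apply: measurable_funS (measurable_uniform_pdf _ _) => //.
- exact: measurable_cst.
- by move=> x _; rewrite lee_fin pdf_le.
rewrite integral_cst; last exact: measurable_itv.
rewrite /= lebesgue_measure_itv/=; case: ifP => _.
  by rewrite -EFinD -EFinM mulrC.
by rewrite mule0 lee_fin mulr_ge0 ?subr_ge0 // ltW.
Qed.

Lemma null_out (X : {RV P >-> R}) (phi a : R) : 0 < phi ->
  0 <= a -> a + phi^-1 <= 1 ->
  uniform_on P X a (a + phi^-1) -> P (X @^-1` ~` `[0, 1]%classic) = 0%E.
Proof.
move=> ph a0 a1 hU; rewrite hU; last by apply: measurableC; exact: measurable_itv.
apply: integral0_eq => x /= hx; rewrite /uniform_pdf; case: ifP => // /andP[h1 h2].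
exfalso; apply: hx; rewrite in_itv /= (le_trans a0 h1) (le_trans h2 a1) //.
Qed.


Lemma Pfin A : measurable A -> P A \is a fin_num.
Proof.
move=> mA; rewrite ge0_fin_numE ?measure_ge0 //.
exact: (le_lt_trans (probability_le1 P mA) (ltry _)).
Qed.

Lemma PfinK A : measurable A -> (fine (P A))%:E = P A.
Proof. by move=> mA; rewrite fineK // Pfin. Qed.

Lemma trunc_lt (v : R) N : 0 <= v <= 1 -> (Num.truncn (v * N%:R) < N.+1)%N.
Proof.
move=> /andP[v0 v1]; rewrite ltnS truncn_le_nat.
apply: (le_lt_trans (y := N%:R)); last by rewrite ltr_nat.
by rewrite -[leRHS]mul1r ler_wpM2r.
Qed.

Lemma approx (v : R) N : (0 < N)%N -> 0 <= v ->
  `|v - (Num.truncn (v * N%:R))%:R / N%:R| <= 1 / N%:R.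
Proof.
move=> N0 v0; have Np : (0 : R) < N%:R by rewrite ltr0n.
have /andP[h1 h2] := truncn_itv (mulr_ge0 v0 (ltW Np)).
set k := Num.truncn _ in h1 h2 *.
have -> : v - k%:R / N%:R = (v * N%:R - k%:R) / N%:R.
  by rewrite mulrBl mulfK // gt_eqF.
rewrite normrM ger0_norm ?subr_ge0 // ger0_norm; last by rewrite invr_ge0 ltW.
apply: ler_wpM2r; first by rewrite invr_ge0 ltW.
by rewrite lerBlDl natr1 ltW.
Qed.

Lemma pair_bound n (w : 'I_n -> {RV P >-> R}) (phi : R) (a : 'I_n -> R)
    (x y : 'I_n -> bool) (i : 'I_n) (M : R) (N : nat) :
  0 < phi -> (forall j, 0 <= a j /\ a j + phi^-1 <= 1) ->
  mutually_independent P (fun j => w j : T -> R) ->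
  (forall j, uniform_on P (w j) (a j) (a j + phi^-1)) ->
  x i != y i -> (0 < N)%N -> 0 <= M ->
  (P [set t | (`|dotb (fun j => w j t) x - dotb (fun j => w j t) y| <= M)%R]
    <= (2 * (M + n%:R / N%:R) * phi)%:E)%E.
Proof.
move=> ph ha hind hU xy N0 M0.
have Np : (0 : R) < N%:R by rewrite ltr0n.
pose z j : R := (x j)%:R - (y j)%:R.
have dE t : dotb (fun j => w j t) x - dotb (fun j => w j t) y = \sum_j w j t * z j.
  by rewrite /dotb -sumrB; apply: eq_bigr => j _; rewrite mulrBr.
pose E := [set t | `|\sum_j w j t * z j| <= M].
have -> : [set t | `|dotb (fun j => w j t) x - dotb (fun j => w j t) y| <= M] = E.
  by apply: funext => t; rewrite /E /= dE.
have mf : measurable_fun setT (fun t => \sum_j w j t * z j).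
  apply: measurable_sum => j; apply: measurable_realfun.measurable_funM.
    exact: measurable_funPT.
  exact: measurable_cst.
have mE : measurable E.
  have -> : E = (fun t => \sum_j w j t * z j) @^-1` `[-M, M]%classic.
    by apply: funext => t; rewrite /E /= in_itv /= -ler_norml.
  by rewrite -[X in measurable X]setTI; apply: mf => //; exact: measurable_itv.
pose L := M + n%:R / N%:R.
have L0 : 0 <= L by rewrite addr_ge0 // divr_ge0 // ltW.
pose ctr (c : {ffun 'I_n -> 'I_N.+1}) :=
  - z i * \sum_(j | j != i) z j * ((c j)%:R / N%:R).
pose B (c : {ffun 'I_n -> 'I_N.+1}) j : set R :=
  if j == i then (if c j == ord0 then `[ctr c - L, ctr c + L]%classic else set0)
  else cell N (c j).
have mB c j : measurable (B c j).
  rewrite /B; case: ifP => _; [case: ifP => _|].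
  - exact: measurable_itv.
  - exact: measurable0.
  - exact: cell_meas.
pose F c := \bigcap_(j in [set: 'I_n]) ((w j : T -> R) @^-1` B c j).
have mF c : measurable (F c).
  apply: fin_bigcap_measurable; first exact: finite_finset.
  by move=> j _; apply: measurable_funPTI.
pose Z := \bigcup_(j in [set: 'I_n]) ((w j : T -> R) @^-1` ~` `[0, 1]%classic).
have mZ : measurable Z.
  apply: fin_bigcup_measurable; first exact: finite_finset.
  by move=> j _; apply: measurable_funPTI; apply: measurableC; exact: measurable_itv.
have PZ : P Z = 0%E.
  apply/eqP; rewrite -measure_le0.
  apply: (le_trans (@union_bound 'I_n Z
     (fun j => (w j : T -> R) @^-1` ~` `[0, 1]%classic) mZ _ _)).
  - by move=> j; apply: measurable_funPTI; apply: measurableC; exact: measurable_itv.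
  - exact: subset_refl.
  rewrite big1 // => j _; have [h1 h2] := ha j; exact: (null_out (w j) phi (a j) ph h1 h2 (hU j)).
pose U := \bigcup_(c in [set: {ffun 'I_n -> 'I_N.+1}]) F c.
have mU : measurable U.
  by apply: fin_bigcup_measurable; [exact: finite_finset | move=> c _; exact: mF].
have cover : E `<=` U `|` Z.
  move=> t Et.
  have [Zt|nZt] := pselect (Z t); first by right.
  left.
  have w01 j : 0 <= w j t <= 1.
    apply: contrapT => h; apply: nZt; exists j => //=.
  pose c : {ffun 'I_n -> 'I_N.+1} :=
    [ffun j => if j == i then ord0 else inord (Num.truncn (w j t * N%:R))].
  exists c => //.
  have cj j : j != i -> (c j : nat) = Num.truncn (w j t * N%:R).
    by move=> ji; rewrite /c ffunE (negbTE ji) inordK //; exact: trunc_lt.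
  move=> j _ /=.
  have [->|ji] := eqVneq j i; last first.
    rewrite /B (negbTE ji); apply/(cellP _ _ _ N0); split.
      by case/andP: (w01 j).
    by rewrite cj.
  have ci : c i = ord0 by rewrite /c ffunE; case: eqP.
  have Bi : B c i = `[ctr c - L, ctr c + L]%classic.
    rewrite /B ci; case: eqP => // _; case: eqP => //.
  rewrite Bi /= in_itv /= -ler_distl.
  have zz : z i * z i = 1.
    by rewrite /z; move: xy; case: (x i); case: (y i) => //= _; lra.
  have zi : `|z i| = 1.
    by rewrite /z; move: xy; case: (x i); case: (y i) => //= _;
      rewrite ?subr0 ?sub0r ?normrN normr1.
  have z1 k : `|z k| <= 1.
    by rewrite /z; case: (x k); case: (y k);
      rewrite /= ?subr0 ?sub0r ?subrr ?normrN ?normr1 ?normr0.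
  have vu k : k != i -> `|w k t - (c k)%:R / N%:R| <= 1 / N%:R.
    move=> ki; rewrite cj //; apply: approx => //.
    by case/andP: (w01 k).
  have e0 : (0 : R) <= 1 / N%:R by rewrite divr_ge0 // ltW.
  have := @key R n i z (fun k => w k t) (fun k => (c k)%:R / N%:R) M (1 / N%:R) zz zi z1 vu e0 Et.
  by rewrite mul1r.
pose q j (t : 'I_N.+1) : R :=
  if j == i then (t == ord0)%:R else fine (P ((w j : T -> R) @^-1` cell N t)).
have q0 j t : 0 <= q j t.
  by rewrite /q; case: ifP => _ //; apply: fine_ge0; exact: measure_ge0.
have PF c : (P (F c) <= (2 * L * phi * \prod_j q j (c j))%:E)%E.
  have hP := hind (B c) (mB c); simpl in hP; rewrite /F hP.
  have -> : (\prod_j P ((w j : T -> R) @^-1` B c j))%E =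
      (\prod_j fine (P ((w j : T -> R) @^-1` B c j)))%:E.
    rewrite -prodEFin; apply: eq_bigr => j _; rewrite PfinK //.
    exact: measurable_funPTI.
  rewrite lee_fin (bigD1 i) //= [X in _ <= _ * X](bigD1 i) //=.
  have e1 : \prod_(j | j != i) fine (P ((w j : T -> R) @^-1` B c j)) =
      \prod_(j | j != i) q j (c j).
    by apply: eq_bigr => j ji; rewrite /B /q (negbTE ji).
  rewrite e1 mulrA; apply: ler_wpM2r; first by apply: prodr_ge0 => j _; exact: q0.
  have Bi : B c i = if c i == ord0 then `[ctr c - L, ctr c + L]%classic else set0.
    by rewrite /B; case: eqP.
  have qi : q i (c i) = (c i == ord0)%:R by rewrite /q; case: eqP.
  rewrite Bi qi; case: ifP => _.
  - rewrite mulr1 -lee_fin PfinK; last by apply: measurable_funPTI; exact: measurable_itv.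
    apply: le_trans (win_bound (w i) phi (a i) (ctr c - L) (ctr c + L) ph (hU i) _) _.
      by rewrite lerD2l (le_trans _ L0) // lerNl oppr0.
    rewrite lee_fin; apply: ler_wpM2r; first exact: ltW.
    have -> : ctr c + L - (ctr c - L) = 2 * L by ring.
    done.
  - by rewrite mulr0 preimage_set0 measure0.
have h1 : (P E <= P (U `|` Z))%E.
  exact: (le_measure _ (mem_set mE) (mem_set (measurableU _ _ mU mZ)) cover).
have h2 : P (U `|` Z) = P U by exact: (measureU0 mU mZ PZ).
have h3 : (P U <= (\sum_c P (F c))%E)%E by exact: union_bound.
rewrite h2 in h1; apply: (le_trans h1); apply: (le_trans h3).
apply: le_trans.
  by apply: lee_sum => c _; exact: PF.
rewrite sumEFin lee_fin -mulr_sumr -bigA_distr_bigA.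
rewrite -[leRHS]mulr1; apply: ler_wpM2l.
  by rewrite mulr_ge0 // ?mulr_ge0 // ltW.
apply: prodr_ile1 => j _; apply/andP; split; first exact: sumr_ge0.
have [->|ji] := eqVneq j i.
  rewrite (eq_bigr (fun t : 'I_N.+1 => (t == ord0)%:R)); last by move=> t _; rewrite /q; case: eqP.
  rewrite (bigD1 ord0) //= big1 => [|t /negbTE -> //]; by rewrite ?eqxx addr0.
rewrite (eq_bigr (fun t : 'I_N.+1 => fine (P ((w j : T -> R) @^-1` cell N t))));
  last by move=> t _; rewrite /q (negbTE ji).
rewrite -lee_fin EFin_sum_fine; last first.
  by move=> t _; apply: Pfin; apply: measurable_funPTI; exact: cell_meas.
exact: sum_cells.
Qed.

Lemma mset n (w : 'I_n -> {RV P >-> R}) (x y : 'I_n -> bool) (M : R) :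
  measurable [set t | (`|dotb (fun j => w j t) x - dotb (fun j => w j t) y| <= M)%R].
Proof.
pose z j : R := (x j)%:R - (y j)%:R.
have dE t : dotb (fun j => w j t) x - dotb (fun j => w j t) y = \sum_j w j t * z j.
  by rewrite /dotb -sumrB; apply: eq_bigr => j _; rewrite mulrBr.
have mf : measurable_fun setT (fun t => \sum_j w j t * z j).
  apply: measurable_sum => j; apply: measurable_realfun.measurable_funM.
    exact: measurable_funPT.
  exact: measurable_cst.
have -> : [set t | (`|dotb (fun j => w j t) x - dotb (fun j => w j t) y| <= M)%R] =
    (fun t => \sum_j w j t * z j) @^-1` `[-M, M]%classic.
  by apply: funext => t; rewrite /= dE in_itv /= -ler_norml.
by rewrite -[X in measurable X]setTI; apply: mf => //; exact: measurable_itv.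
Qed.

End S.

Theorem lemma2p3 (R : realType) (d : measure_display) (T : measurableType d)
    (P : probability T R) (n : nat) (phi : R) (w : 'I_n -> {RV P >-> R})
    (a : 'I_n -> R) :
  1 <= phi ->
  (forall i, 0 <= a i /\ a i + phi^-1 <= 1) ->
  mutually_independent P (fun i => w i : T -> R) ->
  (forall i, uniform_on P (w i) (a i) (a i + phi^-1)) ->
  forall k : nat, (0 < k)%N ->
    (P (event_F k (fun i => w i : T -> R))
      <= ((2 ^+ (2 * n + 1) * n%:R * phi / k%:R : R)%:E))%E.
Proof.
move=> phi1 ha hind hU k k0.
have ph : 0 < phi by apply: lt_le_trans phi1.
have kp : (0 : R) < k%:R by rewrite ltr0n.
pose M : R := n%:R / k%:R.
have M0 : 0 <= M by rewrite divr_ge0 // ltW.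
pose I := ({ffun 'I_n -> bool} * {ffun 'I_n -> bool})%type.
pose G (p : I) : set T := if p.1 != p.2 then
  [set t | (`|dotb (fun j => w j t) p.1 - dotb (fun j => w j t) p.2| <= M)%R] else set0.
have mG p : measurable (G p).
  by rewrite /G; case: ifP => _; [exact: mset | exact: measurable0].
have FE : event_F k (fun i => w i : T -> R) = \bigcup_(p in [set: I]) G p.
  apply/seteqP; split.
  - move=> t [x [y [xy h]]].
    exists ([ffun j => x j], [ffun j => y j]) => //.
    rewrite /G /=; case: ifP => [_|/negbFE/eqP e].
      rewrite /=; move: h.
      have dx (v : 'I_n -> bool) : dotb (fun j => w j t) [ffun j => v j] =
          dotb (fun j => w j t) v.
        by rewrite /dotb; apply: eq_bigr => j _; rewrite ffunE.
      by rewrite !dx.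
    exfalso; apply: xy; apply: funext => j.
    by have := congr1 (fun f : {ffun 'I_n -> bool} => f j) e; rewrite !ffunE.
  - move=> t [p _]; rewrite /G; case: ifP => [hp h|_ []].
    exists (fun j => p.1 j), (fun j => p.2 j); split => //.
    move=> e; move/negP: hp; apply; apply/eqP/ffunP => j.
    exact: (congr1 (fun f => f j) e).
have mF : measurable (event_F k (fun i => w i : T -> R)).
  by rewrite FE; apply: fin_bigcup_measurable; [exact: finite_finset | move=> p _; exact: mG].
have bound N : (0 < N)%N -> (P (event_F k (fun i => w i : T -> R)) <=
    ((2 * (M + n%:R / N%:R) * phi) *+ #|{: I}|)%:E)%E.
  move=> N0.
  have h1 : (P (event_F k (fun i => w i : T -> R)) <= (\sum_(p : I) P (G p))%E)%E.
    by apply: union_bound => //; rewrite FE.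
  apply: (le_trans h1).
  rewrite -sumr_const -sumEFin; apply: lee_sum => p _.
  rewrite /G; case: ifP => [hp|_]; last first.
    by rewrite measure0 lee_fin mulr_ge0 // ?mulr_ge0 // ?addr_ge0 // ?divr_ge0 // ltW.
  have [i hi] : exists i, p.1 i != p.2 i.
    apply: contrapT => hn; move/negP: hp; apply; apply/eqP/ffunP => j.
    by apply/eqP; apply: contrapT => hj; apply: hn; exists j; apply/negP.
  exact: (@pair_bound R d T P n w phi a p.1 p.2 i M N ph ha hind hU hi N0 M0).
have hc : #|{: I}| = (2 ^ n * 2 ^ n)%N by rewrite card_prod card_ffun card_bool card_ord.
pose X := fine (P (event_F k (fun i => w i : T -> R))).
have XE : (X%:E = P (event_F k (fun i => w i : T -> R))) by rewrite /X PfinK.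
rewrite -XE lee_fin.
pose C : R := 2 * (2 ^+ n * 2 ^+ n) * n%:R * phi.
have C0 : 0 <= C by rewrite !mulr_ge0 // ?exprn_ge0 // ltW.
apply/ler_addgt0Pr => e e0.
pose N := (Num.truncn (C / e)).+1.
have N0 : (0 < N)%N by [].
have Np : (0 : R) < N%:R by rewrite ltr0n.
have := bound N N0; rewrite -XE lee_fin hc => hX.
apply: (le_trans hX).
have -> : (2 * (M + n%:R / N%:R) * phi) *+ (2 ^ n * 2 ^ n)%N =
    2 ^+ (2 * n + 1) * n%:R * phi / k%:R + C / N%:R.
  rewrite -mulr_natr natrM natrX /M /C.
  have -> : (2 : R) ^+ (2 * n + 1) = 2 * (2 ^+ n * 2 ^+ n).
    by rewrite addn1 exprS mul2n -addnn exprD.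
  ring.
rewrite lerD2l ler_pdivrMr // mulrC -ler_pdivrMr //.
by apply: ltW; apply: truncnS_gt.
Qed.
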